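(* Let $x_0\in X$ be a regular point and let $u\ge0$ be a $p$-harmonic function on $\mathcal T(x_0)$. Then there exists a measure $\nu$ on $\Omega_{x_0}$ such that $$u(x)=\frac{1}{W(x)W(r(x))\cdots W(r^{n(x)-1}(x))}\,\nu\big(V_{r^{n(x)}(x),r^{n(x)-1}(x),\dots,x}\big),\qquad x\in\mathcal T(x_0).$$
   Context: $X$ is a compact metric space, $r:X\to X$ a finite-to-one, onto, Borel map, $m_0$ a Borel function with $\frac{1}{\#r^{-1}(x)}\sum_{r(y)=x}|m_0(y)|^2=1$, and $W(x)=|m_0(x)|^2/\#r^{-1}(r(x))$. A point $x_0$ is regular if the sets $r^{-n}(x_0)$, $n\in\mathbb N$, are mutually disjoint and no $r^{-n}(x_0)$, $n\ge0$, meets the zero set of $W$. $\mathcal T(x_0)=\bigcup_{n\ge0}r^{-n}(x_0)$; for $x\in\mathcal T(x_0)$, $n(x)$ is the unique $n\ge0$ with $r^n(x)=x_0$. A function $u$ on $\mathcal T(x_0)$ is $p$-harmonic if $u(x)=\sum_{r(y)=x}W(y)u(y)$ for all $x\in\mathcal T(x_0)$. $\Omega_{x_0}=\{(x_0,x_1,\dots):r(x_{n+1})=x_n\ \forall n\ge0\}$, with the product topology generated by the cylinders $V_{x_0,\dots,x_n}=\{(z_k)\in\Omega_{x_0}:z_0=x_0,\dots,z_n=x_n\}$; measures on $\Omega_{x_0}$ are Borel measures for this topology. *)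

(* Defs.v *)
From HB Require Import structures.
From mathcomp Require Import all_boot all_order all_algebra.
From mathcomp Require Import all_classical all_reals all_analysis.
From mathcomp Require Import complex finmap.

Unset Printing Implicit Defensive.

Import Order.TTheory GRing.Theory Num.Theory.
Import numFieldTopology.Exports.
Local Open Scope classical_set_scope.
Local Open Scope ring_scope.

Definition borel_set {T : topologicalType} : set (set T) :=
  <<s [set A : set T | open A] >>.

Definition borel_fun {T U : topologicalType} (f : T -> U) : Prop :=
  forall B : set U, borel_set B -> borel_set (f @^-1` B).

Definition abs2 {R : rcfType} (z : R[i]) : R :=
  (complex.Re z) ^+ 2 + (complex.Im z) ^+ 2.

(* #r^{-1}(x) (meaningful when r is finite-to-one) *)
Definition npre {X : choiceType} (r : X -> X) (x : X) : nat :=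
  (#|` fset_set (r @^-1` [set x]) |)%fset.

Definition Wfun {R : rcfType} {X : choiceType} (r : X -> X) (m0 : X -> R[i])
  (x : X) : R := abs2 (m0 x) / (npre r (r x))%:R.

Definition tree {X : Type} (r : X -> X) (x0 : X) : set X :=
  [set x | exists n : nat, iter n r x = x0].

Definition regular_point {R : rcfType} {X : choiceType} (r : X -> X)
  (m0 : X -> R[i]) (x0 : X) : Prop :=
  (forall m n : nat, (0 < m)%N -> (0 < n)%N -> m <> n ->
     [set x | iter m r x = x0] `&` [set x | iter n r x = x0] = set0)
  /\ (forall (n : nat) (x : X), iter n r x = x0 -> Wfun r m0 x <> 0).

Definition p_harmonic {R : rcfType} {X : choiceType} (r : X -> X)
  (m0 : X -> R[i]) (x0 : X) (u : X -> R) : Prop :=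
  forall x, tree r x0 x ->
    u x = \sum_(y <- fset_set (r @^-1` [set x])) Wfun r m0 y * u y.

Definition Omega_x0 {X : Type} (r : X -> X) (x0 : X) : Type :=
  {z : nat -> X | z 0%N = x0 /\ forall n, r (z n.+1) = z n}.

Definition cylV {X : Type} (r : X -> X) (x0 : X) (s : seq X) : set (Omega_x0 r x0) :=
  [set z | forall i : nat, (i < size s)%N -> proj1_sig z i = nth x0 s i].

(* Topology on Omega_x0 generated by the cylinders (which form a basis):
   open sets are the unions of cylinders. *)
Definition Omega_open {X : Type} (r : X -> X) (x0 : X) : set (set (Omega_x0 r x0)) :=
  [set A | exists C : set (seq X), A = \bigcup_(s in C) cylV r x0 s].

Definition Omega_borel {X : Type} (r : X -> X) (x0 : X) : set (set (Omega_x0 r x0)) :=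
  <<s Omega_open r x0 >>.

Definition is_measure_on {R : realType} {T : Type} (S : set (set T))
  (mu : set T -> \bar R) : Prop :=
  [/\ mu set0 = 0%E,
      (forall A, S A -> (0 <= mu A)%E) &
      (forall F : nat -> set T, (forall i, S (F i)) -> trivIset setT F ->
         (fun n => \sum_(0 <= i < n) mu (F i))%E @ \oo --> mu (\bigcup_n F n))].

(* Main.v *)
Require Import Defs.
From HB Require Import structures.
From mathcomp Require Import all_boot all_order all_algebra.
From mathcomp Require Import all_classical all_reals all_analysis.
From mathcomp Require Import complex finmap.
From mathcomp Require Import ring lra.

Import Order.TTheory GRing.Theory Num.Theory.
Import numFieldTopology.Exports.
Local Open Scope classical_set_scope.
Local Open Scope ring_scope.

Section PS.
Variables (R : realType) (T : eqType) (f : T -> R).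
Definition ps (s : seq T) j := \sum_(y <- take j s) f y.

Lemma ps0 s : ps s 0 = 0.
Proof. by rewrite /ps take0 big_nil. Qed.

Lemma psS s j y0 : (j < size s)%N -> ps s j.+1 = ps s j + f (nth y0 s j).
Proof. by move=> hj; rewrite /ps (take_nth y0 hj) -cats1 big_cat big_seq1. Qed.

Lemma ps_size s : ps s (size s) = \sum_(y <- s) f y.
Proof. by rewrite /ps take_size. Qed.

Lemma ps_mono (y0 : T) s j k : (forall y, y \in s -> 0 <= f y) -> (j <= k)%N -> ps s j <= ps s k.
Proof.
move=> hf; elim: k => [|k IH]; first by rewrite leqn0 => /eqP ->.
rewrite leq_eqVlt => /orP [/eqP -> //|hjk].
apply: le_trans (IH hjk) _.
case: (ltnP k (size s)) => hk.
  rewrite (psS s k y0 hk) lerDl; apply: hf; exact: mem_nth.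
by rewrite /ps !take_oversize // ltnW.
Qed.

Lemma ps_cover s t : 0 <= t < \sum_(y <- s) f y ->
  exists2 j, (j < size s)%N & ps s j <= t < ps s j.+1.
Proof.
elim: s t => [|y s IH] t; first by rewrite big_nil => /andP [h1 h2]; have := le_lt_trans h1 h2; rewrite ltxx.
rewrite big_cons => /andP [h0 ht].
case: (ltP t (f y)) => hty.
  by exists 0%N => //; rewrite ps0 /ps /= big_cons take0 big_nil addr0 h0.
have [|j hj hj2] := IH (t - f y).
  by rewrite subr_ge0 hty /= ltrBlDl.
exists j.+1 => //.
by rewrite /ps /= !big_cons -/(ps s j) -/(ps s j.+1) -lerBrDl -ltrBlDl.
Qed.
End PS.
Arguments ps {R T} f s j.
Arguments ps0 {R T} f s.
Arguments psS {R T} f s j y0 _.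
Arguments ps_size {R T} f s.
Arguments ps_mono {R T} f y0 s j k _ _.
Arguments ps_cover {R T} f s t _.
Section Main.
Variables (R : realType) (X : choiceType) (r : X -> X) (m0 : X -> R[i])
  (x0 : X) (u : X -> R).
Hypothesis r_fin : forall x : X, finite_set (r @^-1` [set x]).
Hypothesis r_onto : forall x : X, exists y : X, r y = x.
Hypothesis u_ge0 : forall x, tree r x0 x -> 0 <= u x.
Hypothesis u_harm : p_harmonic r m0 x0 u.

Definition depth n x := iter n r x = x0.
Definition mass n x := u x * \prod_(k < n) Wfun r m0 (iter k r x).
Definition ch (x : X) : seq X := fset_set (r @^-1` [set x]).
Fixpoint L n x := if n is n'.+1 then
  L n' (r x) + ps (mass n) (ch (r x)) (index x (ch (r x))) else 0.
Definition I n x : set R := [set t | L n x <= t < L n x + mass n x].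

Lemma W_ge0 x : 0 <= Wfun r m0 x.
Proof. by rewrite /Wfun /abs2 divr_ge0 // addr_ge0 // sqr_ge0. Qed.

Lemma mass_ge0 n x : depth n x -> 0 <= mass n x.
Proof.
move=> h; rewrite /mass mulr_ge0 //; first by apply: u_ge0; exists n.
by apply: prodr_ge0 => k _; exact: W_ge0.
Qed.

Lemma mem_ch y x : (y \in ch x) = (r y == x).
Proof.
rewrite /ch in_fset_set //; apply/idP/eqP.
  by rewrite in_setE.
by move=> h; rewrite in_setE.
Qed.

Lemma depthS n y : depth n.+1 y = depth n (r y).
Proof. by rewrite /depth iterSr. Qed.

Lemma mass_harm n x : depth n x -> mass n x = \sum_(y <- ch x) mass n.+1 y.
Proof.
move=> hx.
have -> : \sum_(y <- ch x) mass n.+1 y =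
   \sum_(y <- ch x) (\prod_(k < n) Wfun r m0 (iter k r x)) * (Wfun r m0 y * u y).
  rewrite big_seq [RHS]big_seq; apply: eq_bigr => y.
  rewrite mem_ch => /eqP ry.
  rewrite /mass big_ord_recl /=.
  under eq_bigr => k _ do rewrite add0n -iterS iterSr ry.
  ring.
rewrite -big_distrr /= -u_harm; last by exists n.
by rewrite /mass mulrC.
Qed.


Lemma L_child n x y : r y = x ->
  L n.+1 y = L n x + ps (mass n.+1) (ch x) (index y (ch x)).
Proof. by move=> ry /=; rewrite ry. Qed.

Lemma ch_uniq x : uniq (ch x).
Proof. exact: fset_uniq. Qed.

Lemma ch_ge0 n x : depth n x -> forall y, y \in ch x -> 0 <= mass n.+1 y.
Proof.
move=> hx y; rewrite mem_ch => /eqP ry; apply: mass_ge0.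
by rewrite depthS ry.
Qed.

Lemma child_I n x y t : r y = x -> I n.+1 y t =
  (L n x + ps (mass n.+1) (ch x) (index y (ch x)) <= t <
   L n x + ps (mass n.+1) (ch x) (index y (ch x)).+1).
Proof.
move=> ry; have ys : y \in ch x by rewrite mem_ch ry.
have hj : (index y (ch x) < size (ch x))%N by rewrite index_mem.
rewrite /I (L_child n x y ry) /= (psS (mass n.+1) (ch x) _ y hj) nth_index //.
by rewrite addrA.
Qed.

Lemma child_sub n x y : depth n x -> r y = x -> I n.+1 y `<=` I n x.
Proof.
move=> hx ry t; rewrite (child_I n _ _ t ry) => /andP [h1 h2].
have ys : y \in ch x by rewrite mem_ch ry.
have hj : (index y (ch x) < size (ch x))%N by rewrite index_mem.
have hge := ch_ge0 _ _ hx.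
rewrite /I /=; apply/andP; split.
  apply: le_trans h1; rewrite lerDl.
  by rewrite -(ps0 (mass n.+1) (ch x)); apply: ps_mono.
apply: (lt_le_trans h2); rewrite lerD2l (mass_harm _ _ hx) -ps_size.
exact: ps_mono.
Qed.

Lemma child_cover n x t : depth n x -> I n x t -> exists y, r y = x /\ I n.+1 y t.
Proof.
move=> hx /andP [h1 h2].
have [|j hj /andP [hj1 hj2]] := ps_cover (mass n.+1) (ch x) (t - L n x).
  by rewrite subr_ge0 h1 /= ltrBlDl -mass_harm.
have yin : nth x0 (ch x) j \in ch x by exact: mem_nth.
exists (nth x0 (ch x) j); split; first by move: yin; rewrite mem_ch => /eqP.
move: yin; rewrite mem_ch => /eqP ry.
rewrite (child_I n _ _ t ry) index_uniq //; last exact: ch_uniq.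
by rewrite -lerBrDl hj1 /= -ltrBlDl.
Qed.

Lemma sib_disj n x y y' t : depth n x -> r y = x -> r y' = x ->
  I n.+1 y t -> I n.+1 y' t -> y = y'.
Proof.
move=> hx ry ry'; rewrite (child_I n _ _ t ry) (child_I n _ _ t ry').
have ys : y \in ch x by rewrite mem_ch ry.
have ys' : y' \in ch x by rewrite mem_ch ry'.
have hge := ch_ge0 _ _ hx.
move=> /andP [a1 a2] /andP [b1 b2].
case: (ltngtP (index y (ch x)) (index y' (ch x))) => hjj.
- have hm := ps_mono (mass n.+1) x0 (ch x) _ _ hge hjj.
  rewrite -(lerD2l (L n x)) in hm.
  have := lt_le_trans (le_lt_trans b1 a2) hm.
  by rewrite ltxx.
- have hm := ps_mono (mass n.+1) x0 (ch x) _ _ hge hjj.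
  rewrite -(lerD2l (L n x)) in hm.
  have := lt_le_trans (le_lt_trans a1 b2) hm.
  by rewrite ltxx.
- by rewrite -(nth_index x0 ys) hjj nth_index.
Qed.

Lemma I_in_D n x : depth n x -> I n x `<=` I 0 x0.
Proof.
elim: n x => [|n IH] x; first by rewrite /depth /= => ->.
rewrite depthS => hx t ht.
by apply: (IH _ hx); apply: (child_sub _ _ _ hx erefl).
Qed.

Lemma I_disj n x x' t : depth n x -> depth n x' -> I n x t -> I n x' t -> x = x'.
Proof.
elim: n x x' => [|n IH] x x'; first by rewrite /depth /= => -> ->.
rewrite !depthS => hx hx' ht ht'.
have e : r x = r x'.
  by apply: (IH _ _ hx hx'); [apply: (child_sub _ _ _ hx erefl) | apply: (child_sub _ _ _ hx' erefl)].
apply: (sib_disj _ _ _ _ _ hx erefl _ ht ht'); by rewrite e.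
Qed.


Lemma ex_sel n x t : exists y, r y = x /\
  ((exists y', r y' = x /\ I n.+1 y' t) -> I n.+1 y t).
Proof.
case: (pselect (exists y', r y' = x /\ I n.+1 y' t)) => [[y' [h1 h2]]|hn].
  by exists y'; split.
have [y hy] := r_onto x; exists y; split => // h; by exfalso.
Qed.

Definition sel n x t := proj1_sig (cid (ex_sel n x t)).

Fixpoint zt t n := if n is n'.+1 then sel n' (zt t n') t else x0.

Lemma zt_path t n : r (zt t n.+1) = zt t n.
Proof. exact: (proj2_sig (cid (ex_sel n (zt t n) t))).1. Qed.

Definition phi t : Omega_x0 r x0 := exist _ (zt t) (conj erefl (zt_path t)).

Lemma zt_I t n : I 0 x0 t -> depth n (zt t n) /\ I n (zt t n) t.
Proof.
move=> hD; elim: n => [|n [hd hI]]; first by split.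
split; first by rewrite depthS zt_path.
have [y [ry hy]] := child_cover n (zt t n) t hd hI.
exact: (proj2_sig (cid (ex_sel n (zt t n) t))).2 (ex_intro _ y (conj ry hy)).
Qed.

Lemma zt_eq t n x : I 0 x0 t -> depth n x -> (zt t n = x <-> I n x t).
Proof.
move=> hD hx; have [hd hI] := zt_I t n hD; split; first by move=> <-.
by move=> hx'; apply: (I_disj n _ _ t hd hx hI hx').
Qed.

Lemma path_iter (z : Omega_x0 r x0) k i : sval z i = iter k r (sval z (i + k)%N).
Proof.
elim: k => [|k IH]; first by rewrite addn0.
by rewrite iterSr addnS (proj2 (proj2_sig z)).
Qed.

Lemma cyl_phi t n x : I 0 x0 t -> depth n x ->
  (cylV r x0 [seq iter (n - i) r x | i <- iota 0 n.+1] (phi t) <-> I n x t).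
Proof.
move=> hD hx; rewrite -(zt_eq t n x hD hx) /cylV.
set s := [seq _ | i <- _].
have sz : size s = n.+1 by rewrite /s size_map size_iota.
change ((forall i, (i < size s)%N -> zt t i = nth x0 s i) <-> zt t n = x).
rewrite sz; split.
  move=> h; have := h n (ltnSn n).
  by rewrite /s (nth_map 0%N) ?size_iota // nth_iota // add0n subnn.
move=> hz i hi; rewrite /s (nth_map 0%N) ?size_iota // nth_iota // add0n.
have := path_iter (phi t) (n - i) i; rewrite /= subnKC // => ->.
by rewrite hz.
Qed.

Lemma I_itv n x : I n x = [set` Interval (BLeft (L n x)) (BLeft (L n x + mass n x))].
Proof. by apply/seteqP; split => t; rewrite /= in_itv. Qed.

Lemma I_meas n x : measurable (I n x).
Proof. by rewrite I_itv; exact: measurable_itv. Qed.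

Lemma I_leb n x : depth n x -> lebesgue_measure (I n x) = (mass n x)%:E.
Proof.
move=> hx; have hm := mass_ge0 n x hx.
rewrite I_itv lebesgue_measure_itv /= lte_fin.
case: ltP => h.
  by rewrite -EFinB addrC addKr.
have m0' : mass n x = 0 by apply/le_anti; rewrite hm andbT -(lerD2l (L n x)) addr0.
by rewrite m0'.
Qed.


Lemma depth_fin n : finite_set [set x | depth n x].
Proof.
elim: n => [|n IH].
  have -> : [set x | depth 0 x] = [set x0] by apply/seteqP; split => x.
  exact: finite_set1.
have -> : [set x | depth n.+1 x] = \bigcup_(y in [set x | depth n x]) r @^-1` [set y].
  apply/seteqP; split => x /=.
    by rewrite depthS => h; exists (r x).
  by move=> [y hy ry]; rewrite depthS; move: ry; rewrite /= => ->.
by apply: bigcup_finite => // y _; exact: r_fin.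
Qed.

Definition DD := I 0 x0.

Lemma meas_open A : Omega_open r x0 A -> measurable (DD `&` phi @^-1` A).
Proof.
case=> C ->.
pose E k := DD `&` [set t | exists s, C s /\ size s = k /\
  forall i, (i < k)%N -> zt t i = nth x0 s i].
have -> : DD `&` phi @^-1` (\bigcup_(s in C) cylV r x0 s) = \bigcup_k E k.
  apply/seteqP; split => t.
    by move=> [hD [s Cs hs]]; exists (size s) => //; split => //; exists s.
  by move=> [k _ [hD [s [Cs [sz h]]]]]; split => //; exists s => //= i; rewrite sz; exact: h.
apply: bigcupT_measurable => -[|j].
  case: (pselect (exists s, C s /\ size s = 0%N)) => [[s [Cs sz]]|hn].
    have -> : E 0%N = DD.
      apply/seteqP; split => t; first by case.
      by move=> hD; split => //; exists s.
    exact: I_meas.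
  have -> : E 0%N = set0.
    apply/seteqP; split => t // [_ [s [Cs [sz _]]]].
    by apply: hn; exists s.
  exact: measurable0.
pose Q x := exists s, C s /\ size s = j.+1 /\
  forall i, (i < j.+1)%N -> iter (j - i) r x = nth x0 s i.
have -> : E j.+1 = \bigcup_(x in [set x | depth j x] `&` Q) I j x.
  apply/seteqP; split => t.
    move=> [hD [s [Cs [sz h]]]].
    have [hd hI] := zt_I t j hD.
    exists (zt t j) => //; split => //; exists s; split => //; split => // i hi.
    rewrite -h //.
    have := path_iter (phi t) (j - i) i; rewrite /= subnKC // => ->.
  move=> [x [hd [s [Cs [sz h]]]] hI].
  have hD : DD t by exact: (I_in_D j x hd t hI).
  split => //; exists s; split => //; split => // i hi.
  rewrite -h //.
  have <- := (zt_eq t j x hD hd).2 hI.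
  have := path_iter (phi t) (j - i) i; rewrite /= subnKC // => ->.
apply: fin_bigcup_measurable.
  exact: finite_setIl (depth_fin j).
by move=> x _; exact: I_meas.
Qed.


Lemma G_sigma : sigma_algebra setT (fun A => measurable (DD `&` phi @^-1` A)).
Proof.
split.
- by rewrite preimage_set0 setI0; exact: measurable0.
- move=> A hA.
  have -> : DD `&` phi @^-1` (setT `\` A) = DD `\` (DD `&` phi @^-1` A).
    by apply/seteqP; split => t /=; [move=> [hD [_ hA']]; split => // -[] | move=> [hD hn]; split => //; split => // hA'; apply: hn].
  apply: measurableD => //; exact: I_meas.
- move=> F hF; rewrite preimage_bigcup setI_bigcupr.
  exact: bigcupT_measurable.
Qed.

Lemma borel_meas A : Omega_borel r x0 A -> measurable (DD `&` phi @^-1` A).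
Proof. move=> hA; exact: (smallest_sub G_sigma meas_open hA). Qed.

Lemma main_exists : exists nu : set (Omega_x0 r x0) -> \bar R,
  is_measure_on (Omega_borel r x0) nu /\
  forall x n, depth n x ->
    nu (cylV r x0 [seq iter (n - i) r x | i <- iota 0 n.+1]) = (mass n x)%:E.
Proof.
exists (fun A => lebesgue_measure (DD `&` phi @^-1` A)); split.
  split.
  - by rewrite preimage_set0 setI0 measure0.
  - by move=> A _; exact: measure_ge0.
  - move=> F hF htriv; rewrite preimage_bigcup setI_bigcupr.
    apply: measure_sigma_additive; first by move=> i; exact: borel_meas.
    move=> i j _ _ [t [[_ hi] [_ hj]]]; apply: htriv => //; by exists (phi t).
move=> x n hx.
have -> : DD `&` phi @^-1` cylV r x0 [seq iter (n - i) r x | i <- iota 0 n.+1] = I n x.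
  apply/seteqP; split => t.
    by move=> [hD hc]; exact: (cyl_phi t n x hD hx).1.
  move=> hI; have hD : DD t by exact: (I_in_D n x hx t hI).
  by split => //; exact: (cyl_phi t n x hD hx).2.
exact: I_leb.
Qed.

End Main.

Theorem theorem4p5 (R : realType) (X : pseudoMetricType R)
  (X_hausdorff : hausdorff_space X) (X_compact : compact [set: X])
  (r : X -> X)
  (r_fin : forall x : X, finite_set (r @^-1` [set x]))
  (r_onto : forall x : X, exists y : X, r y = x)
  (r_borel : borel_fun r)
  (m0 : X -> R[i])
  (m0_borel_Re : borel_fun (fun x => complex.Re (m0 x) : R))
  (m0_borel_Im : borel_fun (fun x => complex.Im (m0 x) : R))
  (m0_norm : forall x : X,
     (npre r x)%:R^-1 * \sum_(y <- fset_set (r @^-1` [set x])) abs2 (m0 y) = 1)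
  (x0 : X) (x0_reg : regular_point r m0 x0)
  (u : X -> R)
  (u_ge0 : forall x, tree r x0 x -> 0 <= u x)
  (u_harm : p_harmonic r m0 x0 u) :
  exists nu : set (Omega_x0 r x0) -> \bar R,
    is_measure_on (Omega_borel r x0) nu /\
    forall (x : X) (n : nat), iter n r x = x0 ->
      ((u x)%:E =
        ((\prod_(k < n) Wfun r m0 (iter k r x))^-1)%:E *
        nu (cylV r x0 [seq iter (n - i) r x | i <- iota 0 n.+1]))%E.
Proof.
have [nu [hnu hc]] := @main_exists R X r m0 x0 u r_fin r_onto u_ge0 u_harm.
exists nu; split => // x n hn.
rewrite hc // /mass -EFinM; congr EFin.
have hP : \prod_(k < n) Wfun r m0 (iter k r x) != 0.
  rewrite prodf_seq_neq0; apply/allP => k _ /=; apply/eqP.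
  apply: (x0_reg.2 (n - k)%N).
  by rewrite -iterD subnK // ltnW.
by field.
Qed.
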